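(* Let $\mathcal{B}$ be a base, $P=\{p_1,\dots,p_n\}$ and $S$ atomic multisets, and $q$ an atom. The following are equivalent: (1) $P,S\vdash_{\mathcal{B}}q$; (2) for every base $\mathcal{C}\supseteq\mathcal{B}$ and all atomic multisets $T_1,\dots,T_n$ with $T_i\vdash_{\mathcal{C}}p_i$ for each $i=1,\dots,n$, we have $T_1,\dots,T_n,S\vdash_{\mathcal{C}}q$.
   Context: Fix a set $\mathbb{A}$ of atoms; atomic multisets are finite multisets of atoms, ''$P,Q$'' denotes multiset union. An atomic sequent is $P\Rightarrow p$ with $P$ an atomic multiset, $p$ an atom. An atomic box is a multiset of atomic sequents. An atomic rule is a triple $\langle\mathbf{A},\mathbf{S},p\rangle$ with $\mathbf{A}$ a multiset of atomic boxes, $\mathbf{S}$ an atomic box, $p$ an atom. A base is a set of atomic rules. An atom $p$ is persistent in $\mathcal{B}$ if some $\langle\varnothing,\mathbf{S},p\rangle\in\mathcal{B}$ has $\mathbf{S}\neq\varnothing$. Derivability $\vdash_{\mathcal{B}}$ is defined inductively: (Ref) $p\vdash_{\mathcal{B}}p$; (App) if $\langle\mathbf{A},\mathbf{S},p\rangle\in\mathcal{B}$ with $\mathbf{A}=\{\mathbf{T}_1,\dots,\mathbf{T}_m\}$, and there are atomic multisets $C_1,\dots,C_n$ ($n\ge m$) and a multiset $D=\{d_{m+1},\dots,d_n\}$ of atoms persistent in $\mathcal{B}$ such that $C_i,Q\vdash_{\mathcal{B}}q$ for every $i\le m$ and every $Q\Rightarrow q\in\mathbf{T}_i$, $C_j\vdash_{\mathcal{B}}d_j$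 for every $m<j\le n$, and $D,U\vdash_{\mathcal{B}}v$ for every $U\Rightarrow v\in\mathbf{S}$, then $C_1,\dots,C_n\vdash_{\mathcal{B}}p$. *)

(* Defs.v *)
From mathcomp Require Import all_boot.
From mathcomp Require Import finmap multiset.

Set Implicit Arguments.
Unset Strict Implicit.
Unset Printing Implicit Defensive.

Local Open Scope mset_scope.

Definition sequent (Atom : choiceType) := ({mset Atom} * Atom)%type.
Definition box (Atom : choiceType) := {mset (sequent Atom)}.
Definition rule (Atom : choiceType) := ({mset (box Atom)} * box Atom * Atom)%type.
Definition base (Atom : choiceType) := rule Atom -> Prop.

Definition subbase (Atom : choiceType) (B C : base Atom) : Prop :=
  forall r, B r -> C r.

Definition msum (Atom : choiceType) (Cs : seq {mset Atom}) : {mset Atom} :=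
  foldr (fun X Y => X `+` Y) mset0 Cs.

Definition persistent (Atom : choiceType) (B : base Atom) (p : Atom) : Prop :=
  exists S : box Atom, B (mset0, S, p) /\ S != mset0.

(* Derivability  P |-_B p.
   In (App): the multiset of boxes A = {T_1,..,T_m} is enumerated by the list
   Ts; Cs = [C_1;..;C_m]; Ex = [(C_{m+1},d_{m+1});..;(C_n,d_n)];
   D = {d_{m+1},..,d_n}. *)
Inductive derives (Atom : choiceType) (B : base Atom) : {mset Atom} -> Atom -> Prop :=
| d_ref (p : Atom) : derives B [mset p] p
| d_app (As : {mset (box Atom)}) (S : box Atom) (p : Atom)
        (Ts : seq (box Atom)) (Cs : seq {mset Atom})
        (Ex : seq ({mset Atom} * Atom)) :
    B (As, S, p) ->
    seq_mset Ts = As ->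
    size Cs = size Ts ->
    (forall i, i < size Ts ->
       forall (Q : {mset Atom}) (q : Atom), (Q, q) \in nth mset0 Ts i ->
         derives B (nth mset0 Cs i `+` Q) q) ->
    (forall e, e \in Ex -> persistent B e.2 /\ derives B e.1 e.2) ->
    (forall (U : {mset Atom}) (v : Atom), (U, v) \in S ->
         derives B (seq_mset (map snd Ex) `+` U) v) ->
    derives B (msum Cs `+` msum (map fst Ex)) p.

(* Main.v *)
Require Import Defs.
From mathcomp Require Import all_boot.
From mathcomp Require Import finmap multiset.
From mathcomp Require Import zify.
Local Open Scope mset_scope.

Section Aux.
Variable Atom : choiceType.

Definition derives_ind2 (B : base Atom) (P : {mset Atom} -> Atom -> Prop)
  (Href : forall p, P [mset p] p)
  (Happ : forall (As : {mset (box Atom)}) (S : box Atom) (p : Atom)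
        (Ts : seq (box Atom)) (Cs : seq {mset Atom})
        (Ex : seq ({mset Atom} * Atom)),
    B (As, S, p) ->
    seq_mset Ts = As ->
    size Cs = size Ts ->
    (forall i, i < size Ts ->
       forall (Q : {mset Atom}) (q : Atom), (Q, q) \in nth mset0 Ts i ->
         derives B (nth mset0 Cs i `+` Q) q /\ P (nth mset0 Cs i `+` Q) q) ->
    (forall e, e \in Ex -> persistent B e.2 /\ derives B e.1 e.2 /\ P e.1 e.2) ->
    (forall (U : {mset Atom}) (v : Atom), (U, v) \in S ->
         derives B (seq_mset (map snd Ex) `+` U) v /\
         P (seq_mset (map snd Ex) `+` U) v) ->
    P (msum Cs `+` msum (map fst Ex)) p) :
  forall G q, derives B G q -> P G q :=
fix F G q (d : derives B G q) {struct d} : P G q :=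
 match d in derives _ G q return P G q with
 | d_ref p => Href p
 | d_app As Sx p Ts Cs Ex hB hA hs hT hE hS =>
   Happ As Sx p Ts Cs Ex hB hA hs
     (fun i hi Q q' hin => conj (hT i hi Q q' hin) (F _ _ (hT i hi Q q' hin)))
     (fun e he => match hE e he with conj h1 h2 => conj h1 (conj h2 (F _ _ h2)) end)
     (fun U v hin => conj (hS U v hin) (F _ _ (hS U v hin)))
 end.

Lemma mono (B C : base Atom) G q : derives B G q -> subbase B C -> derives C G q.
Proof.
move=> d sBC; elim/derives_ind2: G q / d.
  by move=> p; apply: d_ref.
move=> As S p Ts Cs Ex hB hA hs hT hE hS.
apply: (d_app (As:=As) (S:=S) (Ts:=Ts)) => //.
- exact: sBC.
- by move=> i hi Q q' hin; case: (hT i hi Q q' hin).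
- move=> e he; case: (hE e he) => [[S' [h1 h2]] [_ h3]]; split => //.
  by exists S'; split => //; apply: sBC.
- by move=> U v hin; case: (hS U v hin).
Qed.

Lemma msum_cons (X : {mset Atom}) Xs : msum (X :: Xs) = X `+` msum Xs.
Proof. by []. Qed.

Lemma in_msum (a : Atom) Xs : a \in msum Xs ->
  exists i, i < size Xs /\ a \in nth mset0 Xs i.
Proof.
elim: Xs => [|X Xs IH] /=; first by rewrite in_mset0.
rewrite in_msetD => /orP [h|/IH [i [hi h]]]; first by exists 0.
by exists i.+1.
Qed.

Lemma msum_set_nth (Xs : seq {mset Atom}) i Y : i < size Xs ->
  msum (set_nth mset0 Xs i Y) `+` nth mset0 Xs i = msum Xs `+` Y.
Proof.
elim: Xs i => [|X Xs IH] [|i] //= hi.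
  by apply/msetP => a; rewrite !msetE2; lia.
rewrite -msetDA IH //; apply/msetP => a; rewrite !msetE2; lia.
Qed.

Lemma mem_set_nth (T : eqType) (x0 : T) s j y e : j < size s ->
  e \in set_nth x0 s j y -> e = y \/ e \in s.
Proof.
move=> hj /(nthP x0) [k hk <-].
rewrite nth_set_nth /=; case: eqP => _; first by left.
right; apply: mem_nth; move: hk; rewrite size_set_nth; lia.
Qed.

Lemma set_nth_nth' (T : Type) (x0 : T) s j : j < size s ->
  set_nth x0 s j (nth x0 s j) = s.
Proof. by elim: s j => [|x s IH] [|j] //= hj; rewrite IH. Qed.

Lemma map_set_nth' (T1 T2 : Type) (f : T1 -> T2) x0 s n y :
  map f (set_nth x0 s n y) = set_nth (f x0) (map f s) n (f y).
Proof.
elim: s n => [|x s IH] [|n] //=; last by rewrite IH.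
by elim: n => //= n ->.
Qed.

Lemma cut (C : base Atom) G q : derives C G q ->
  forall p S0 T, G = p +` S0 -> derives C T p -> derives C (T `+` S0) q.
Proof.
move=> d; elim/derives_ind2: G q / d.
  move=> p p' S0 T E dT.
  have /mset1P ep : p' \in [mset p] by rewrite E mset1D1.
  subst p'.
  have -> : S0 = mset0.
    apply/msetP => a; move/msetP: E => /(_ a).
    rewrite mset1DE msetnE mset0E; case: (a == p) => /=; lia.
  by rewrite msetD0.
move=> As S p Ts Cs Ex hB hA hs hT hE hS p0 S0 T E dT.
have : p0 \in msum Cs `+` msum (map fst Ex) by rewrite E mset1D1.
rewrite in_msetD => /orP [/in_msum [i [hi hin]] | /in_msum [j [hj hin]]].
- set Ci := nth mset0 Cs i.
  set Si := Ci `\ p0.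
  have hCi : Ci = p0 +` Si by rewrite msetB1K.
  set Cs' := set_nth mset0 Cs i (T `+` Si).
  have E' : T `+` S0 = msum Cs' `+` msum (map fst Ex).
    apply/msetP => a.
    move/msetP: E => /(_ a); move/msetP: hCi => /(_ a).
    have := @msum_set_nth Cs i (T `+` Si) hi; move/msetP => /(_ a).
    rewrite !msetE2.
    rewrite -/Ci -/Cs'. lia.
  rewrite E'; apply: (d_app (As:=As) (S:=S) (Ts:=Ts)) => //.
  + by rewrite size_set_nth; lia.
  + move=> k hk Q q' hin'; rewrite nth_set_nth /=.
    case: eqP => [ek|_]; last by case: (hT k hk Q q' hin').
    subst k; case: (hT i hk Q q' hin') => _ IH.
    rewrite -msetDA; apply: IH dT.
    by rewrite -/Ci hCi msetDA.
  + by move=> e he; case: (hE e he) => [h1 [h2 _]].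
  + by move=> U v hin'; case: (hS U v hin').
- rewrite size_map in hj.
  set x0 := (mset0 : {mset Atom}, p).
  set ej := nth x0 Ex j.
  have hin' : p0 \in ej.1 by move: hin; rewrite (nth_map x0).
  set Sj := ej.1 `\ p0.
  have hCj : ej.1 = p0 +` Sj by rewrite msetB1K.
  set Ex' := set_nth x0 Ex j (T `+` Sj, ej.2).
  have Em : map fst Ex' = set_nth mset0 (map fst Ex) j (T `+` Sj).
    by rewrite /Ex' map_set_nth'.
  have Es : map snd Ex' = map snd Ex.
    by rewrite /Ex' map_set_nth' /= -(nth_map x0 p snd) // set_nth_nth' // size_map.
  have E' : T `+` S0 = msum Cs `+` msum (map fst Ex').
    apply/msetP => a.
    move/msetP: E => /(_ a); move/msetP: hCj => /(_ a).
    have := @msum_set_nth (map fst Ex) j (T `+` Sj); rewrite size_map => /(_ hj).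
    rewrite (nth_map x0) // -/ej -Em.
    move/msetP => /(_ a).
    rewrite !msetE2. lia.
  rewrite E'; apply: (d_app (As:=As) (S:=S) (Ts:=Ts)) => //.
  + by move=> k hk Q q' hin2; case: (hT k hk Q q' hin2).
  + move=> e /(@mem_set_nth _ x0 Ex j _ e hj) [->|he] /=; last by case: (hE e he) => [h1 [h2 _]].
    have hej : ej \in Ex by apply: mem_nth.
    case: (hE ej hej) => [h1 [_ IH]]; split => //.
    by apply: IH dT.
  + by rewrite Es => U v hin2; case: (hS U v hin2).
Qed.

Lemma cut_many (C : base Atom) (q : Atom) ps : forall S Ts,
  derives C (seq_mset ps `+` S) q -> size Ts = size ps ->
  (forall i, i < size ps -> derives C (nth mset0 Ts i) (nth q ps i)) ->
  derives C (msum Ts `+` S) q.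
Proof.
elim: ps => [|a ps IH] S [|t Ts] //.
  move=> d _ _; rewrite /msum /= mset0D.
  have E0 : seq_mset [::] = (mset0 : {mset Atom}).
    by apply/msetP => x; rewrite mset_seqE mset0E.
  by rewrite E0 mset0D in d.
move=> d [hs] hi.
have d1 : derives C (t `+` (seq_mset ps `+` S)) q.
  apply: (@cut C _ _ d a (seq_mset ps `+` S) t); first by rewrite mset_cons msetDA.
  exact: (hi 0).
rewrite msetDCA in d1.
rewrite msum_cons -msetDA msetDCA; apply: IH => // i hi'.
exact: (hi i.+1).
Qed.

End Aux.

Theorem lemma1 (Atom : choiceType) (B : base Atom) (ps : seq Atom)
    (S : {mset Atom}) (q : Atom) :
  derives B (seq_mset ps `+` S) q <->
  (forall C : base Atom, subbase B C ->
   forall Ts : seq {mset Atom}, size Ts = size ps ->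
     (forall i, i < size ps -> derives C (nth mset0 Ts i) (nth q ps i)) ->
     derives C (msum Ts `+` S) q).
Proof.
split.
  move=> d C sBC Ts hs hi; apply: cut_many hs hi.
  exact: mono d sBC.
move=> H.
have -> : seq_mset ps = msum (map (fun p => [mset p]) ps).
  elim: ps {H} => [|a ps IH] /=.
    by apply/msetP => x; rewrite mset_seqE mset0E.
  by rewrite mset_cons IH.
apply: H => //; first by rewrite size_map.
move=> i hi; rewrite (nth_map q) //; exact: d_ref.
Qed.
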